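(* For any query $Q$, $\mathsf{w}(Q)\le\mathsf{w}(\widehat Q)\le\mathsf{w}(Q)+1$, where $\widehat Q$ is the multivariate extension of $Q$.
   Context: A query is a full conjunctive query $Q = R_1(\mathbf X_1)\wedge\cdots\wedge R_k(\mathbf X_k)$. Multivariate extension: take fresh variables $Z_1,\dots,Z_k$. For a permutation $\sigma$ of $[k]$, the component $\widehat Q_\sigma$ replaces each atom $R_{\sigma_i}(\mathbf X_{\sigma_i})$ by $\widehat R_{\sigma_i}(Z_1,\dots,Z_i,\mathbf X_{\sigma_i})$; $\widehat Q$ is the union of all components. Fractional hypertree width $\mathsf{w}(P)$ of a query $P$: minimum over tree decompositions of $P$ (trees with bags of variables covering every atom schema, the bags containing any variable forming a connected subtree) of the maximum over bags $B$ of the fractional edge cover number of $P$ restricted to $B$ (each atom schema intersected with $B$). For a union of queries, $\mathsf{w}$ is the maximum over the queries. *)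

(* Defs.v *)
From mathcomp Require Import all_boot all_order all_algebra all_fingroup.
From mathcomp Require Import classical_sets reals.
Set Implicit Arguments. Unset Strict Implicit. Unset Printing Implicit Defensive.
Import Order.TTheory GRing.Theory Num.Theory.
Local Open Scope ring_scope.

Record atom (Rel V : Type) := Atom { rsym : Rel ; args : seq V }.

Definition query (Rel V : Type) := seq (atom Rel V).

Section Width.
Variables (Rel : Type) (V : finType) (R : realType).

Definition schema (a : atom Rel V) : {set V} := [set x in args a].

Definition qvars (Q : query Rel V) : {set V} := \bigcup_(a <- Q) schema a.

Definition frac_cover (Q : query Rel V) (B : {set V}) : R :=
  inf [set r : R | exists u : 'I_(size Q) -> R,
        (forall i, 0 <= u i) /\
        (forall x, x \in B ->
           1 <= \sum_(i < size Q | x \in schema (tnth (in_tuple Q) i) :&: B) u i) /\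
        r = \sum_(i < size Q) u i].

(* Trees on nodes 'I_n.+1 given by a parent function: node 0 is the root and
   every other node i has parent par i < i.  Every finite tree arises so. *)
Definition parent_ok n (par : 'I_n.+1 -> 'I_n.+1) :=
  forall i : 'I_n.+1, i != ord0 -> (par i < i)%N.

Definition tree_adj n (par : 'I_n.+1 -> 'I_n.+1) : rel 'I_n.+1 :=
  fun i j => ((i != ord0) && (par i == j)) || ((j != ord0) && (par j == i)).

Definition tree_connected n (par : 'I_n.+1 -> 'I_n.+1) (S : {set 'I_n.+1}) :=
  forall t1 t2, t1 \in S -> t2 \in S ->
    connect (fun a b => [&& a \in S, b \in S & tree_adj par a b]) t1 t2.

Definition tree_decomposition (Q : query Rel V) n
    (par : 'I_n.+1 -> 'I_n.+1) (bag : 'I_n.+1 -> {set V}) :=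
  [/\ parent_ok par,
      (forall t, bag t \subset qvars Q),
      (forall i : 'I_(size Q), exists t, schema (tnth (in_tuple Q) i) \subset bag t) &
      (forall x, tree_connected par [set t | x \in bag t])].

Definition fhw (Q : query Rel V) : R :=
  inf [set r : R | exists n (par : 'I_n.+1 -> 'I_n.+1) (bag : 'I_n.+1 -> {set V}),
        tree_decomposition Q par bag /\
        r = \big[Num.max/0]_(t : 'I_n.+1) frac_cover Q (bag t)].

End Width.

(* Multivariate extension. Fresh variables Z_1..Z_k are encoded as inr j,
   j : 'I_k (Z_{j+1}); original variables as inl x. *)
Definition ext_atom (Rel V : Type) k (i : 'I_k) (a : atom Rel V)
  : atom Rel (V + 'I_k) :=
  Atom (rsym a) ([seq inr j | j : 'I_k <- enum 'I_k & (j <= i)%N] ++ map inl (args a)).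

(* component hat Q_sigma: the i-th atom (0-based) is hat R_{sigma i}
   (Z_1, ..., Z_{i+1}, X_{sigma i}). *)
Definition ext_component (Rel V : Type) (Q : query Rel V) (s : 'S_(size Q))
  : query Rel (V + 'I_(size Q)) :=
  [seq ext_atom i (tnth (in_tuple Q) (s i)) | i <- enum 'I_(size Q)].
Arguments ext_component {Rel V} Q s.

(* Main.v *)
Require Import Defs.
From mathcomp Require Import all_boot all_order all_algebra all_fingroup.
From mathcomp Require Import classical_sets reals zify.
Import Order.TTheory GRing.Theory Num.Theory.
Local Open Scope ring_scope.
Set Implicit Arguments. Unset Strict Implicit. Unset Printing Implicit Defensive.

Lemma bm_ge0 (R : realType) (I : finType) (F : I -> R) :
  0 <= \big[Num.max/0]_(i : I) F i.
Proof. by apply: (big_rec (fun x : R => 0 <= x)) => // i x _ hx; rewrite le_max hx orbT. Qed.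

Lemma bm_leP (R : realType) (I : finType) (F : I -> R) M :
  0 <= M -> (forall i, F i <= M) -> \big[Num.max/0]_(i : I) F i <= M.
Proof. by move=> h0 h; apply: (big_ind (fun x : R => x <= M)) => // x y hx hy; rewrite ge_max hx. Qed.

Lemma bm_ub (R : realType) (I : finType) (F : I -> R) i0 :
  F i0 <= \big[Num.max/0]_(i : I) F i.
Proof. by rewrite (bigD1 i0) //= le_max lexx. Qed.

Lemma bm_mono (R : realType) (I : finType) (F G : I -> R) :
  (forall i, F i <= G i) -> \big[Num.max/0]_(i : I) F i <= \big[Num.max/0]_(i : I) G i.
Proof.
move=> h; apply: bm_leP; first exact: bm_ge0.
by move=> i; apply: le_trans (h i) (bm_ub _ _).
Qed.

Lemma sum_ge_term (R : realType) (I : finType) (P : pred I) (F : I -> R) i0 :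
  P i0 -> (forall i, 0 <= F i) -> F i0 <= \sum_(i | P i) F i.
Proof.
move=> Pi0 h; rewrite (bigD1 i0) //= lerDl; exact: sumr_ge0.
Qed.

Lemma qvarsP (Rel : Type) (V : finType) (Q : query Rel V) x :
  reflect (exists i : 'I_(size Q), x \in schema (tnth (in_tuple Q) i)) (x \in qvars Q).
Proof.
rewrite /qvars big_tnth; apply: (iffP bigcupP).
  by case=> i _ h; exists i.
by case=> i h; exists i.
Qed.

Definition fcset (R : realType) (Rel : Type) (V : finType) (Q : query Rel V) (B : {set V}) : set R :=
  [set r : R | exists u : 'I_(size Q) -> R,
        (forall i, 0 <= u i) /\
        (forall x, x \in B ->
           1 <= \sum_(i < size Q | x \in schema (tnth (in_tuple Q) i) :&: B) u i) /\
        r = \sum_(i < size Q) u i].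
Arguments fcset R {Rel V} Q B.

Lemma fcset_nonempty (R : realType) (Rel : Type) (V : finType) (Q : query Rel V) (B : {set V}) :
  B \subset qvars Q -> nonempty (fcset R Q B).
Proof.
move=> sB; exists (\sum_(i < size Q) (1 : R)), (fun _ => 1); split=> // ; split=> // x xB.
have /qvarsP [i hi] := fintype.subsetP sB x xB.
apply: (sum_ge_term (i0 := i)) => //; by rewrite inE hi xB.
Qed.

Lemma fcset_lb (R : realType) (Rel : Type) (V : finType) (Q : query Rel V) (B : {set V}) :
  lbound (fcset R Q B) 0.
Proof. by move=> r [u [h0 [_ ->]]]; apply: sumr_ge0. Qed.

Lemma fc_le (R : realType) (Rel1 Rel2 : Type) (V1 V2 : finType) (Q1 : query Rel1 V1)
   (Q2 : query Rel2 V2) (B1 : {set V1}) (B2 : {set V2}) (c : R) :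
  B1 \subset qvars Q1 ->
  (forall r, fcset R Q1 B1 r -> exists2 r', fcset R Q2 B2 r' & r' <= r + c) ->
  frac_cover R Q2 B2 <= frac_cover R Q1 B1 + c.
Proof.
move=> sB h; rewrite -lerBlDr; apply: lb_le_inf; first exact: fcset_nonempty.
move=> r /h [r' h1 h2]; rewrite lerBlDr; apply: le_trans h2.
apply: ge_inf h1; exists 0; exact: fcset_lb.
Qed.

Definition fhwset (R : realType) (Rel : Type) (V : finType) (Q : query Rel V) : set R :=
  [set r : R | exists n (par : 'I_n.+1 -> 'I_n.+1) (bag : 'I_n.+1 -> {set V}),
        tree_decomposition Q par bag /\
        r = \big[Num.max/0]_(t : 'I_n.+1) frac_cover R Q (bag t)].
Arguments fhwset R {Rel V} Q.

Lemma full_connected n (par : 'I_n.+1 -> 'I_n.+1) (S : {set 'I_n.+1}) :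
  parent_ok par -> (forall t, t \in S) -> tree_connected par S.
Proof.
move=> hp hS.
set e := (fun a b => [&& a \in S, b \in S & tree_adj par a b]).
have esym : symmetric e.
  by move=> a b; rewrite /e /tree_adj !hS /= orbC.
have h0 : forall m (t : 'I_n.+1), (val t < m)%N -> connect e t ord0.
  elim=> [|m IH] t // ht.
  case: (eqVneq t ord0) => [-> | tn0]; first exact: connect0.
  apply: connect_trans (IH (par t) _).
    by apply: connect1; rewrite /e !hS /tree_adj tn0 eqxx.
  by apply: leq_trans (hp t tn0) _.
move=> t1 t2 _ _; apply: connect_trans (h0 _ t1 (ltnSn _)) _.
by rewrite (sym_connect_sym esym); apply: h0 (ltnSn _).
Qed.

Lemma trivial_td (Rel : Type) (V : finType) (Q : query Rel V) :
  tree_decomposition Q (fun t : 'I_1 => t) (fun _ => qvars Q).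
Proof.
split.
- by move=> i; rewrite (ord1 i) eqxx.
- by move=> _; exact: subxx.
- move=> i; exists ord0; apply/fintype.subsetP => x hx; apply/qvarsP; by exists i.
- by move=> x t1 t2 _ _; rewrite (ord1 t1) (ord1 t2); exact: connect0.
Qed.

Lemma fhwset_nonempty (R : realType) (Rel : Type) (V : finType) (Q : query Rel V) :
  nonempty (fhwset R Q).
Proof. by eexists; exists 0%N, (fun t => t), (fun _ => qvars Q); split; first exact: trivial_td. Qed.

Lemma fhwset_lb (R : realType) (Rel : Type) (V : finType) (Q : query Rel V) :
  lbound (fhwset R Q) 0.
Proof. by move=> r [n [par [bag [_ ->]]]]; exact: bm_ge0. Qed.

Lemma fhw_le (R : realType) (Rel1 Rel2 : Type) (V1 V2 : finType) (Q1 : query Rel1 V1)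
   (Q2 : query Rel2 V2) (c : R) :
  (forall r, fhwset R Q1 r -> exists2 r', fhwset R Q2 r' & r' <= r + c) ->
  fhw R Q2 <= fhw R Q1 + c.
Proof.
move=> h; rewrite -lerBlDr; apply: lb_le_inf; first exact: fhwset_nonempty.
move=> r /h [r' h1 h2]; rewrite lerBlDr; apply: le_trans h2.
apply: ge_inf h1; exists 0; exact: fhwset_lb.
Qed.

Lemma fhw_ge0 (R : realType) (Rel : Type) (V : finType) (Q : query Rel V) : 0 <= fhw R Q.
Proof. apply: lb_le_inf; [exact: fhwset_nonempty | exact: fhwset_lb]. Qed.

Lemma size_ext (Rel : Type) (V : finType) (Q : query Rel V) s :
  size (ext_component Q s) = size Q.
Proof. by rewrite size_map size_enum_ord. Qed.

Lemma tnth_ext (Rel : Type) (V : finType) (Q : query Rel V) s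
   (i : 'I_(size (ext_component Q s))) :
  let j := cast_ord (size_ext s) i in
  tnth (in_tuple (ext_component Q s)) i = ext_atom j (tnth (in_tuple Q) (s j)).
Proof.
move=> j; rewrite (tnth_nth (ext_atom j (tnth (in_tuple Q) (s j)))) /= /ext_component.
rewrite (nth_map j); last by rewrite size_enum_ord; exact: (ltn_ord j).
have -> : nat_of_ord i = nat_of_ord j by [].
by rewrite nth_ord_enum.
Qed.

Lemma schema_ext_inl (Rel : Type) (V : finType) k (i : 'I_k) (a : atom Rel V) x :
  (inl x \in schema (ext_atom i a)) = (x \in schema a).
Proof.
rewrite /schema !inE /ext_atom /= mem_cat (mem_map (fun _ _ => _)); last by move=> ? ? [].
suff -> : (inl x \in [seq inr j | j : 'I_k <- enum 'I_k & (j <= i)%N]) = false by [].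
by apply/negbTE/mapP => -[].
Qed.

Lemma schema_ext_inr (Rel : Type) (V : finType) k (i : 'I_k) (a : atom Rel V) z :
  (inr z \in schema (ext_atom i a)) = (z <= i)%N.
Proof.
rewrite /schema !inE /ext_atom /= mem_cat (mem_map (fun _ _ => _)); last by move=> ? ? [].
rewrite mem_filter mem_enum andbT.
suff -> : (inr z \in [seq inl x | x : V <- args a]) = false by rewrite orbF.
by apply/negbTE/mapP => -[].
Qed.

Lemma eq_leW (R : realType) (x y : R) : x = y -> x <= y.
Proof. by move=> ->. Qed.

Section Ext.
Variables (R : realType) (Rel : Type) (V : finType) (Q : query Rel V) (s : 'S_(size Q)).
Local Notation Qh := (ext_component Q s).
Local Notation e := (size_ext s).
Definition gi (i : 'I_(size Qh)) : 'I_(size Q) := s (cast_ord e i).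
Definition hi (j : 'I_(size Q)) : 'I_(size Qh) := cast_ord (esym e) ((s^-1)%g j).
Lemma ghK j : gi (hi j) = j.
Proof. by rewrite /gi /hi cast_ordKV permKV. Qed.
Lemma hgK i : hi (gi i) = i.
Proof. by rewrite /gi /hi permK cast_ordK. Qed.
Lemma hi_bij : bijective hi.
Proof. by exists gi; [move=> j; exact: ghK | move=> i; exact: hgK]. Qed.
Lemma gi_bij : bijective gi.
Proof. by exists hi; [move=> j; exact: hgK | move=> i; exact: ghK]. Qed.

Lemma mem_inl i x :
  (inl x \in schema (tnth (in_tuple Qh) i)) = (x \in schema (tnth (in_tuple Q) (gi i))).
Proof. by rewrite tnth_ext schema_ext_inl. Qed.

Lemma mem_inr i z :
  (inr z \in schema (tnth (in_tuple Qh) i)) = (z <= i)%N.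
Proof. by rewrite tnth_ext schema_ext_inr. Qed.

Lemma fc_lower (Bh : {set V + 'I_(size Q)}) : Bh \subset qvars Qh ->
  frac_cover R Q [set x | inl x \in Bh] <= frac_cover R Qh Bh.
Proof.
move=> sB; rewrite -[X in _ <= X]addr0; apply: fc_le => // r [u [u0 [uf ->]]].
exists (\sum_(j < size Q) u (hi j)); last by rewrite addr0 (reindex hi) //; exact: onW_bij hi_bij.
exists (fun j => u (hi j)); split=> //; split=> // x; rewrite inE => hx.
move: (uf _ hx); rewrite (reindex hi) /=; last exact: onW_bij hi_bij.
congr (_ <= _); apply: eq_bigl => j; by rewrite !finset.in_setI mem_inl ghK inE.
Qed.

Definition liftB (B : {set V}) : {set V + 'I_(size Q)} :=
  [set v | if v is inl x then x \in B else true].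

Lemma sum_ind (n m : nat) :
  \sum_(i < n) (if (val i).+1 == m then 1 else 0 : R) <= 1.
Proof.
case: (pickP (fun i : 'I_n => (val i).+1 == m)) => [i0 hi0 | hn].
  rewrite (bigD1 i0) //= hi0 big1 ?addr0 // => i ni.
  case: ifP => // /eqP him; move/eqP: hi0; rewrite -him => /eqP; rewrite eqSS => /eqP hv.
  by move: ni; rewrite (val_inj hv) eqxx.
by rewrite big1 // => i _; rewrite hn.
Qed.

Lemma fc_upper (B : {set V}) : B \subset qvars Q ->
  frac_cover R Qh (liftB B) <= frac_cover R Q B + 1.
Proof.
move=> sB; apply: fc_le => // r [u [u0 [uf ->]]].
pose uh := fun i : 'I_(size Qh) => u (gi i) + (if (val i).+1 == size Q then 1 else 0).
have uh0 : forall i, 0 <= uh i.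
  by move=> i; rewrite /uh; apply: addr_ge0 => //; case: ifP.
exists (\sum_(i < size Qh) uh i).
  exists uh; split=> //; split=> // v; rewrite inE; case: v => [x hx | z _].
    apply: le_trans (uf _ hx) _.
    rewrite (reindex gi) /=; last exact: onW_bij gi_bij.
    apply: (@le_trans _ _ (\sum_(i | inl x \in schema (tnth (in_tuple Qh) i) :&: liftB B) u (gi i))).
      by apply: eq_leW; apply: eq_bigl => i; rewrite !finset.in_setI mem_inl !inE hx.
    by apply: ler_sum => i _; rewrite /uh lerDl; case: ifP.
  have kpos : (0 < size Qh)%N by rewrite size_ext; apply: leq_ltn_trans (ltn_ord z).
  have hlt : ((size Qh).-1 < size Qh)%N by move: kpos; case: (size Qh).
  pose i0 := Ordinal hlt.
  have hz := ltn_ord z.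
  have Pi0 : inr z \in schema (tnth (in_tuple Qh) i0) :&: liftB B.
    rewrite finset.in_setI mem_inr inE andbT /= size_ext; lia.
  apply: le_trans (@sum_ge_term R _ (fun i => inr z \in schema (tnth (in_tuple Qh) i) :&: liftB B) uh i0 Pi0 uh0).
  rewrite /uh /= size_ext prednK; last by rewrite -(size_ext s).
  by rewrite eqxx addrC lerDl.
rewrite /uh big_split /= lerD //.
  by apply: eq_leW; rewrite (reindex gi) //; exact: onW_bij gi_bij.
exact: sum_ind.
Qed.
End Ext.

Section Ext2.
Variables (R : realType) (Rel : Type) (V : finType) (Q : query Rel V) (s : 'S_(size Q)).
Local Notation Qh := (ext_component Q s).

Lemma fhw_lower : fhw R Q <= fhw R Qh.
Proof.
rewrite -[X in _ <= X]addr0; apply: fhw_le => r [n [par [bagh [[hp hs hc hconn] ->]]]].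
pose bag := fun t => [set x | inl x \in bagh t].
exists (\big[Num.max/0]_(t : 'I_n.+1) frac_cover R Q (bag t)); last first.
  by rewrite addr0; apply: bm_mono => t; apply: fc_lower.
exists n, par, bag; split=> //; split=> //.
- move=> t; apply/fintype.subsetP => x; rewrite inE => hx.
  have /qvarsP [i hi] := fintype.subsetP (hs t) _ hx.
  by apply/qvarsP; exists (gi i); rewrite -mem_inl.
- move=> j; have [t ht] := hc (hi s j); exists t.
  apply/fintype.subsetP => x hx; rewrite inE; apply: (fintype.subsetP ht).
  by rewrite mem_inl ghK.
- move=> x; have -> : [set t | x \in bag t] = [set t | inl x \in bagh t].
    by apply/setP => t; rewrite !inE.
  exact: hconn.
Qed.

Lemma fhw_upper : fhw R Qh <= fhw R Q + 1.
Proof.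
apply: fhw_le => r [n [par [bag [[hp hs hc hconn] ->]]]].
exists (\big[Num.max/0]_(t : 'I_n.+1) frac_cover R Qh (liftB Q (bag t))).
  exists n, par, (fun t => liftB Q (bag t)); split=> //; split=> //.
  - move=> t; apply/fintype.subsetP => -[x | z]; rewrite inE => hx.
      have /qvarsP [j hj] := fintype.subsetP (hs t) _ hx.
      by apply/qvarsP; exists (hi s j); rewrite mem_inl ghK.
    apply/qvarsP; exists (cast_ord (esym (size_ext s)) z); by rewrite mem_inr.
  - move=> i; have [t ht] := hc (gi i); exists t.
    apply/fintype.subsetP => -[x | z] hx; rewrite inE //.
    by apply: (fintype.subsetP ht); rewrite -mem_inl.
  - case=> [x | z].
      have -> : [set t | inl x \in liftB Q (bag t)] = [set t | x \in bag t].
        by apply/setP => t; rewrite !inE.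
      exact: hconn.
    by apply: full_connected => // t; rewrite !inE.
apply: bm_leP; first by apply: addr_ge0; [exact: bm_ge0 | exact: ler01].
move=> t; apply: le_trans (fc_upper _ _ (hs t)) _.
by rewrite lerD2r; apply: (@bm_ub R _ (fun t => frac_cover R Q (bag t)) t).
Qed.
End Ext2.

Unset Implicit Arguments.
Set Strict Implicit.
Theorem mainTheorem10 (R : realType) (Rel : Type) (V : finType) (Q : query Rel V) :
  let w_hat : R := \big[Num.max/0]_(s : 'S_(size Q)) fhw R (ext_component Q s) in
  fhw R Q <= w_hat /\ w_hat <= fhw R Q + 1.
Proof.
move=> w_hat; rewrite /w_hat; split.
  apply: le_trans (fhw_lower R 1%g) _; exact: bm_ub.
apply: bm_leP; first by apply: addr_ge0; [exact: fhw_ge0 | exact: ler01].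
move=> s; exact: fhw_upper.
Qed.
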